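(* Let $R>0$, $X=\{x\in\mathbb{R}^n:\|x\|_\infty\le R\}$ and $\mathcal{X}=X^m\subset\mathbb{R}^{m\times n}$ (the $m\times n$ matrices all of whose rows lie in $X$, equivalently all of whose entries lie in $[-R,R]$), and let $\Pi_{\mathcal{X}}$ be the Euclidean projection onto $\mathcal{X}$. Let $J=\frac1m\mathbf{1}\mathbf{1}^\top\in\mathbb{R}^{m\times m}$. Then for every $x\in\mathbb{R}^{m\times n}$, \[ \|(I-J)\Pi_{\mathcal{X}}(x)\|\leq\|(I-J)x\|, \] where $\|\cdot\|$ is the Frobenius norm. *)

(* Defs.v *)
From mathcomp Require Import all_boot all_order all_algebra.
From mathcomp Require Import reals.
Set Implicit Arguments. Unset Strict Implicit. Unset Printing Implicit Defensive.
Import Order.TTheory GRing.Theory Num.Theory.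
Local Open Scope ring_scope.

Definition frob (R : realType) (m n : nat) (A : 'M[R]_(m, n)) : R :=
  Num.sqrt (\sum_(i < m) \sum_(j < n) A i j ^+ 2).

Definition in_boxX (R : realType) (m n : nat) (Rad : R) (A : 'M[R]_(m, n)) : Prop :=
  forall i j, `|A i j| <= Rad.

Definition is_proj (R : realType) (m n : nat) (S : 'M[R]_(m, n) -> Prop)
  (x p : 'M[R]_(m, n)) : Prop :=
  S p /\ forall y, S y -> frob (x - p) <= frob (x - y).

Definition Jmat (R : realType) (m : nat) : 'M[R]_m :=
  \matrix_(i < m, j < m) (m%:R)^-1.

(* Main.v *)
Require Import Defs.
From mathcomp Require Import all_boot all_order all_algebra.
From mathcomp Require Import reals.
From mathcomp Require Import ring lra.
Import Order.TTheory GRing.Theory Num.Theory.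
Local Open Scope ring_scope.

Definition clamp {R : realType} (Rad a : R) : R :=
  if a < - Rad then - Rad else if Rad < a then Rad else a.

Lemma clamp_lip (R : realType) (Rad a b : R) : 0 < Rad ->
  (clamp Rad a - clamp Rad b) ^+ 2 <= (a - b) ^+ 2.
Proof.
move=> hR.
suff H : forall u v : R, v <= u -> 0 <= clamp Rad u - clamp Rad v <= u - v.
  have [hab|hab] := leP b a.
    have /andP [h1 h2] := H _ _ hab.
    rewrite -subr_ge0 -[X in _ <= X - _]mulr1 -[X in _ <= _ - X]mulr1 !expr2; nra.
  have /andP [h1 h2] := H _ _ (ltW hab).
  rewrite -(sqrrN (a - b)) -(sqrrN (clamp Rad a - _)) !opprB.
  rewrite -subr_ge0 !expr2; nra.
move=> u v huv; rewrite /clamp.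
have [h1|h1] := ltrP u (- Rad); have [h2|h2] := ltrP v (- Rad);
have [h3|h3] := ltrP Rad u; have [h4|h4] := ltrP Rad v;
apply/andP; split; lra.
Qed.

Lemma clamp_box (R : realType) (Rad a : R) : 0 < Rad -> `|clamp Rad a| <= Rad.
Proof.
move=> hR; rewrite ler_norml /clamp.
case: ifP => h1; try case: ifP => h2; move: h1; try move: h2;
  rewrite ?ltNge => *; apply/andP; split; lra.
Qed.

Lemma clamp_uniq (R : realType) (Rad a p : R) : 0 < Rad -> `|p| <= Rad ->
  (a - p) ^+ 2 <= (a - clamp Rad a) ^+ 2 -> p = clamp Rad a.
Proof.
move=> hR; rewrite ler_norml => /andP [hp1 hp2].
rewrite /clamp; case: ifP => h1; try case: ifP => h2; move: h1; try move: h2;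
  rewrite ?ltNge => * ; apply/eqP; rewrite eq_le; apply/andP; split; nra.
Qed.

Lemma proj_entry (R : realType) (m n : nat) (Rad : R) (hRad : 0 < Rad)
  (x p : 'M[R]_(m, n)) (hp : is_proj (in_boxX Rad) x p) i j :
  p i j = clamp Rad (x i j).
Proof.
case: hp => hbox hmin.
set c := clamp Rad (x i j).
pose y := \matrix_(k, l) if (k == i) && (l == j) then c else p k l.
have hy : in_boxX Rad y.
  move=> k l; rewrite mxE; case: ifP => _; [exact: clamp_box | exact: hbox].
have := hmin y hy; rewrite /frob ler_sqrt; last first.
  by apply: sumr_ge0 => k _; apply: sumr_ge0 => l _; apply: sqr_ge0.
set d := (x i j - c) ^+ 2 - (x i j - p i j) ^+ 2.
have -> : \sum_(k < m) \sum_(l < n) (x - y) k l ^+ 2 =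
    \sum_(k < m) \sum_(l < n) ((x - p) k l ^+ 2 + (if (k == i) && (l == j) then d else 0)).
  apply: eq_bigr => k _; apply: eq_bigr => l _; rewrite !mxE.
  case: ifP => /= [/andP [/eqP -> /eqP ->]|_]; rewrite /d; last by rewrite addr0.
  by rewrite addrCA subrr addr0.
have -> : \sum_(k < m) \sum_(l < n) ((x - p) k l ^+ 2 + (if (k == i) && (l == j) then d else 0))
   = \sum_(k < m) \sum_(l < n) (x - p) k l ^+ 2 + d.
  under eq_bigr => k _ do rewrite big_split /=.
  rewrite big_split /=; congr (_ + _).
  rewrite (eq_bigr (fun k => if k == i then d else 0)); last first.
    move=> k _; case: eqP => [_|_] /=; last by rewrite big1.
    by rewrite -big_mkcond big_pred1_eq.
  by rewrite -big_mkcond big_pred1_eq.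
rewrite lerDl /d subr_ge0 => hd.
apply: clamp_uniq; [done | exact: hbox | ].
by move: hd; rewrite ?mxE.
Qed.

Lemma IJ_entry (R : realType) (m n : nat) (A : 'M[R]_(m, n)) i j :
  ((1%:M - Jmat R m) *m A) i j = A i j - (m%:R)^-1 * \sum_(k < m) A k j.
Proof.
rewrite mulmxBl mul1mx !mxE mulr_sumr; congr (_ - _).
by apply: eq_bigr => k _; rewrite mxE.
Qed.

Lemma col_ineq (R : realType) (m : nat) (Rad : R) (hRad : 0 < Rad) (a b : 'I_m -> R) (hb : forall i, b i = clamp Rad (a i)) :
  \sum_i (b i - (m%:R)^-1 * \sum_k b k) ^+ 2 <=
  \sum_i (a i - (m%:R)^-1 * \sum_k a k) ^+ 2.
Proof.
set mb := (m%:R)^-1 * \sum_k b k; set ma := (m%:R)^-1 * \sum_k a k.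
set t := clamp Rad ma.
have h0 : \sum_(i < m) (b i - mb) = 0.
  rewrite sumrB sumr_const card_ord /mb.
  have gen : forall k (c : 'I_k -> R), \sum_i c i - (k%:R^-1 * \sum_i c i) *+ k = 0.
    move=> [|k] c; first by rewrite big_ord0 mulr0n subrr.
    by rewrite -mulr_natr mulrC mulrA mulfV ?mul1r ?subrr // pnatr_eq0.
  exact: gen.
apply: (@le_trans _ _ (\sum_i (b i - t) ^+ 2)).
  have -> : \sum_i (b i - t) ^+ 2 =
      \sum_i ((b i - mb) ^+ 2 + (2 * (mb - t)) * (b i - mb) + (mb - t) ^+ 2).
    by apply: eq_bigr => i _; rewrite /GRing.exp /=; ring.
  rewrite !big_split /= -mulr_sumr h0 mulr0 addr0 lerDl.
  by apply: sumr_ge0 => i _; apply: sqr_ge0.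
by apply: ler_sum => i _; rewrite hb; apply: clamp_lip.
Qed.

Theorem lemma3p1 (R : realType) (m n : nat) (Rad : R) (hRad : 0 < Rad)
  (x p : 'M[R]_(m, n)) (hp : is_proj (in_boxX Rad) x p) :
  frob ((1%:M - Jmat R m) *m p) <= frob ((1%:M - Jmat R m) *m x).
Proof.
rewrite /frob ler_sqrt; last first.
  by apply: sumr_ge0 => k _; apply: sumr_ge0 => l _; apply: sqr_ge0.
rewrite exchange_big [X in _ <= X]exchange_big /=.
apply: ler_sum => j _.
under eq_bigr => i _ do rewrite IJ_entry.
under [X in _ <= X]eq_bigr => i _ do rewrite IJ_entry.
exact: (@col_ineq _ _ _ hRad (fun i => x i j) (fun i => p i j)
  (fun i => @proj_entry _ _ _ _ hRad _ _ hp i j)).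
Qed.
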